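(* Consider the UAV Persistent Service model in the homogeneous case $g_i=g$ for all $i\in\mathcal N$, with $N=|\mathcal N|\ge 1$, $f>0$, $c\ge 0$, $g>0$, $2g<f$. Run the HoRR schedule with a fleet of $$M=N+\left\lceil \frac{c+2g}{f-2g}\,N\right\rceil$$ UAVs. Then at every dispatch time a fully charged backup UAV is available at the RS, no UAV ever flies longer than $f$ time units between two recharges, and every location in $\mathcal N$ is covered at every time $t\ge 0$.
   Context: UAV Persistent Service model: there is a single recharging station (RS) and a finite set $\mathcal N$ of $N$ aerial locations, served by a fleet of identical UAVs. A UAV with a full battery can fly for at most $f>0$ time units; replacing/recharging its battery at the RS takes $c\ge 0$ time units, after which it is fully charged again. Flying between the RS and location $i$ (in either direction) takes the displacement time $g_i>0$, with $2g_i<f$. A UAV's activity consists of sorties: it leaves the RS fully charged, flies to one location, stays there (it is then said to cover that location), flies back to the RS, and the total airborne time of the sortie is at most $f$; back at the RS it spends $c$ time units recharging (and may then wait idle) before its next sortie. At time $0$ every UAV is fully charged, either at the RS or already at a location. A location is covered at time $t$ if some UAV is at that location at time $t$. HoRR schedule (homogeneous case $g_i=g$): let $x=\frac{f-2g}{N}$. At time $0$, one fully charged UAV is placed at each of the $N$ locations; the remaining UAVs (backups) are fully charged at the RS. For every $k=1,2,\dots$: a fully charged backup UAV departs the RS at time $kx-g$ (if this is negative it is considered already en route at time $0$) and arrives at time $kx$ at the location of the serving UAV with the least remaining energy (ties broken arbitrarily); it takes over that location, and the relieved UAV flies back to the RS (arriving at $kx+g$), recharges (until $kx+g+c$) and then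 becomes a backup. Backups are dispatched in the order in which they became ready. *)

(* Defs.v *)
From HB Require Import structures.
From mathcomp Require Import all_boot all_order all_algebra.
Set Implicit Arguments. Unset Strict Implicit. Unset Printing Implicit Defensive.
Import Order.TTheory GRing.Theory Num.Theory.
Local Open Scope ring_scope.

Section HoRR.
Variables (R : archiRealFieldType) (N : nat) (f c g : R).

Definition slot : R := (f - 2 * g) / N%:R.

Definition fleet : nat :=
  (N + `|Num.ceil ((c + 2 * g) / (f - 2 * g) * N%:R)|)%N.

(* UAVs are identified by natural numbers 0 .. fleet-1.
   State of the system just after a relief event:
   - serv i   : the UAV currently serving location i;
   - start u  : departure time (from the RS, fully charged) of the current /
                last sortie of u (0 for the UAVs placed at a location at time 0,
                which are fully charged at time 0);
   - ready u  : time at which u (a backup) is back at the RS and recharged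
                (0 for the initial backups);
   - queue    : the backups at the RS, in the order in which they became ready. *)
Record state := St {
  serv : 'I_N -> nat;
  start : nat -> R;
  ready : nat -> R;
  queue : seq nat }.

Definition init_state : state :=
  St (fun i => nat_of_ord i) (fun _ => 0) (fun _ => 0) (iota N (fleet - N)).

Definition energy (s : state) (t : R) (u : nat) : R := f - (t - start s u).

Definition dispatched (s : state) : nat := head 0%N (queue s).

(* Relief event at time t (= k * slot) at location l: the dispatched backup,
   which departed at t - g, takes over l; the relieved UAV v flies back
   (arriving at t + g), recharges until t + g + c, and joins the queue. *)
Definition step (l : 'I_N) (t : R) (s : state) : state :=
  let u := dispatched s in
  let v := serv s l in
  St (fun i => if i == l then u else serv s i)
     (fun w => if w == u then t - g else start s w)
     (fun w => if w == v then t + g + c else ready s w)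
     (rcons (behead (queue s)) v).

(* The run of the HoRR schedule for the sequence of relieved locations
   [loc k] (k >= 1, relief at time k * slot); [run loc k] is the state
   after the k-th relief. *)
Fixpoint run (loc : nat -> 'I_N) (k : nat) : state :=
  match k with
  | 0 => init_state
  | k'.+1 => step (loc k) (k%:R * slot) (run loc k')
  end.

Definition horr_choice (loc : nat -> 'I_N) : Prop :=
  forall (k : nat) (i : 'I_N),
    energy (run loc k) (k.+1%:R * slot) (serv (run loc k) (loc k.+1))
    <= energy (run loc k) (k.+1%:R * slot) (serv (run loc k) i).

(* UAV u is at location l at time t: between two consecutive relief times
   k*slot and (k+1)*slot the assignment of state k holds (at a relief time
   both the arriving and the departing UAV are at the location). *)
Definition at_loc (loc : nat -> 'I_N) (u : nat) (l : 'I_N) (t : R) : Prop :=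
  exists k : nat, serv (run loc k) l = u /\
                  k%:R * slot <= t /\ t <= k.+1%:R * slot.

Definition covered (loc : nat -> 'I_N) (l : 'I_N) (t : R) : Prop :=
  exists u : nat, (u < fleet)%N /\ at_loc loc u l t.

End HoRR.

(* Main.v *)
Require Import Defs.
From HB Require Import structures.
From mathcomp Require Import all_boot all_order all_algebra.
From mathcomp Require Import ring lra zify.
Import Order.TTheory GRing.Theory Num.Theory.
Local Open Scope ring_scope.

Lemma card_upd (n : nat) (P Q : pred 'I_n) (a : 'I_n) : P a ->
  (forall i, i != a -> Q i = P i) -> (#|Q| + ~~ Q a = #|P|)%N.
Proof.
move=> Pa QP; rewrite (cardD1 a P) (cardD1 a Q).
have -> : #|[predD1 Q & a]| = #|[predD1 P & a]|.
  apply: eq_card => i; rewrite /in_mem /=; case: eqP => //= /eqP ia; exact: QP.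
rewrite -!topredE /= Pa. case: (Q a) => /=; [by rewrite addn0 | by rewrite add0n addnC].
Qed.

Lemma div_mul_cancel (R : archiRealFieldType) (a b n : R) : n != 0 -> b != 0 -> a / b * n * (b / n) = a.
Proof. move=> nz bz. field. by rewrite nz bz. Qed.

Section Proof.
Variables (R : archiRealFieldType) (N : nat) (f c g : R) (loc : nat -> 'I_N).
Hypotheses (HN : (1 <= N)%N) (Hf : 0 < f) (Hc : 0 <= c) (Hg : 0 < g) (Hfg : 2 * g < f).

Local Notation x := (slot N f g).
Ltac slra := have ? := Hf; have ? := Hc; have ? := Hg; have ? := Hfg; lra.
Local Notation K := (fleet N f c g - N)%N.
Local Notation st k := (run f c g loc k).

Lemma K_eq : K = `|Num.ceil ((c + 2 * g) / (f - 2 * g) * N%:R)|%N.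
Proof. by rewrite /fleet addKn. Qed.

Lemma x_pos : 0 < x.
Proof.
rewrite /slot; apply: divr_gt0; first slra.
by rewrite ltr0n.
Qed.

Lemma Nx : N%:R * x = f - 2 * g.
Proof.
rewrite /slot mulrC -mulrA mulVf ?mulr1 //.
by rewrite pnatr_eq0 -lt0n.
Qed.

Lemma K_ge : c + 2 * g <= K%:R * x.
Proof.
rewrite K_eq.
set y := (c + 2 * g) / (f - 2 * g) * N%:R.
have y0 : 0 < y.
  rewrite /y mulr_gt0 ?divr_gt0 //; try slra. by rewrite ltr0n.
have cy := ceil_ge y.
have c0 : (0 <= Num.ceil y)%R by rewrite ceil_ge0; slra.
rewrite natr_absz ger0_norm //.
have xp := x_pos.
have : y * x <= (Num.ceil y)%:~R * x by rewrite ler_pM2r.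
suff -> : y * x = c + 2 * g by [].
rewrite /y /slot.
have nz : N%:R != 0 :> R by rewrite pnatr_eq0 -lt0n.
have nz2 : f - 2 * g != 0 by apply/eqP; slra.
exact: div_mul_cancel.
Qed.

Lemma K_pos : (0 < K)%N.
Proof.
have := K_ge; have := x_pos; case: K => [|//] /= xp.
rewrite mul0r; slra.
Qed.

Definition sinv (s : state R N) :=
  [/\ forall i, (serv s i < fleet N f c g)%N,
      forall w, w \in queue s -> (w < fleet N f c g)%N,
      forall i j, serv s i = serv s j -> i = j,
      forall i, serv s i \notin queue s
    & uniq (queue s) /\ size (queue s) = K].

Lemma sinv_run k : sinv (st k).
Proof.
elim: k => [|k [H1 H2 H3 H4 [H5 H6]]].
  rewrite /sinv /=; split.
  - move=> i; rewrite /fleet; have := ltn_ord i; lia.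
  - move=> w; rewrite mem_iota; rewrite /fleet; lia.
  - exact: ord_inj.
  - move=> i; rewrite mem_iota negb_and; have := ltn_ord i; lia.
  - by rewrite iota_uniq size_iota.
rewrite /= /step /dispatched /=.
set a := loc k.+1.
move: H1 H2 H3 H4 H5 H6.
case: (queue (st k)) => [|u q] H1 H2 H3 H4 H5 H6.
  by move: H6 K_pos => /= <-.
have uq : u \in u :: q by rewrite mem_head.
move: H5; rewrite cons_uniq => /andP[uNq uq'].
split => /=.
- move=> i; case: eqP => _; [exact: H2 | exact: H1].
- move=> w; rewrite mem_rcons in_cons => /orP[/eqP->|wq]; first exact: H1.
  by apply: H2; rewrite in_cons wq orbT.
- move=> i j; case: (eqVneq i a) => [->|ia]; case: (eqVneq j a) => [->|ja] //.
    move=> E; have := H4 j; by rewrite -E uq.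
  move=> E; have := H4 i; by rewrite E uq.
  exact: H3.
- move=> i; case: (eqVneq i a) => [_|ia]; rewrite mem_rcons in_cons negb_or.
    rewrite /= uNq andbT; apply/eqP => E; have := H4 a; by rewrite -E uq.
  apply/andP; split.
    by apply/eqP => /H3 /eqP; rewrite (negbTE ia).
  by have := H4 i; rewrite in_cons negb_or => /andP[].
- split; last by rewrite size_rcons -H6.
  rewrite rcons_uniq uq' andbT.
  by have := H4 a; rewrite in_cons negb_or => /andP[].
Qed.


Lemma disp_in k : dispatched (st k) \in queue (st k).
Proof.
case: (sinv_run k) => _ _ _ _ [_]; rewrite /dispatched.
case: (queue (st k)) => [|u q] /=; last by rewrite mem_head.
by move=> E; move: K_pos; rewrite -E.
Qed.

Lemma serv_ne_disp k i : serv (st k) i != dispatched (st k).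
Proof.
case: (sinv_run k) => _ _ _ H4 _; apply/eqP => E.
by have := H4 i; rewrite E disp_in.
Qed.

Lemma ready_inv k : forall i, (i < K)%N ->
  ready (st k) (nth 0%N (queue (st k)) i) <= Num.max 0 (((k + i + 1)%:R - K%:R) * x + g + c).
Proof.
elim: k => [|k IH] i iK.
  by rewrite /= le_max lexx.
have [H1 H2 H3 H4 [H5 H6]] := sinv_run k.
have IH' := IH i.+1.
rewrite /= /step /dispatched /=.
set a := loc k.+1.
move: H2 H4 H5 H6 IH'; rewrite /dispatched.
case: (queue (st k)) => [|u q] H2 H4 H5 H6 IH' /=.
  by move: H6 K_pos => /= <-.
move: H6 => /= H6.
rewrite nth_rcons.
case: ltnP => [iq|qi].
  have vq : nth 0%N q i != serv (st k) a.
    apply/eqP => E; have := H4 a; rewrite in_cons -E mem_nth ?orbT //.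
  rewrite (negbTE vq).
  have := IH' ltac:(lia) => /=.
  by have -> : (k + i.+1 + 1 = k.+1 + i + 1)%N by lia.
have -> : i = size q by lia.
rewrite eqxx eqxx.
have -> : (k.+1 + size q + 1 = k.+1 + K)%N by lia.
rewrite le_max; apply/orP; right.
by rewrite natrD addrK.
Qed.


Lemma part1 k : queue (st k) != [::] /\
  ready (st k) (dispatched (st k)) <= Num.max 0 (k.+1%:R * x - g).
Proof.
have [_ _ _ _ [_ H6]] := sinv_run k.
split; first by apply/eqP => E; move: K_pos; rewrite -H6 E.
have := (@ready_inv k 0%N K_pos); rewrite nth0 addn0 addn1 /dispatched.
rewrite !le_max => /orP[->//|h]; apply/orP; right; apply: le_trans h _.
have := K_ge; rewrite mulrBl; slra.
Qed.

Definition S k (i : 'I_N) := start (st k) (serv (st k) i).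

Lemma S_step k i : S k.+1 i = if i == loc k.+1 then k.+1%:R * x - g else S k i.
Proof.
rewrite /S /= /step /=.
case: (eqVneq i (loc k.+1)) => [_|ia] /=; first by rewrite eqxx.
by rewrite (negbTE (serv_ne_disp k i)).
Qed.

Lemma horr_min (H : horr_choice f c g loc) k i : S k (loc k.+1) <= S k i.
Proof.
have := H k i; rewrite /energy /S; slra.
Qed.

Definition rcp k l : pred 'I_N := fun i => S k i <= S k l.

Lemma rc_le k l : (#|rcp k l| <= N)%N.
Proof. by have := max_card (rcp k l); rewrite card_ord. Qed.

Lemma Iinv (H : horr_choice f c g loc) k l :
  k%:R * x <= (N%:R - (#|rcp k l|)%:R) * x + S k l + g.
Proof.
have xp := x_pos.
elim: k l => [|k IH] l.
  rewrite mul0r /S /= addr0.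
  have : 0 <= (N%:R - (#|rcp 0 l|)%:R) * x.
    apply: mulr_ge0; last exact: ltW. by rewrite subr_ge0 ler_nat rc_le.
  slra.
have hr := rc_le k.+1 l.
have hN : (#|rcp k.+1 l|)%:R <= N%:R :> R by rewrite ler_nat.
have hk : k.+1%:R * x = k%:R * x + x by rewrite -natr1 mulrDl mul1r.
rewrite hk mulrBl.
have hNx : (#|rcp k.+1 l|)%:R * x <= N%:R * x by rewrite ler_pM2r.
case: (eqVneq l (loc k.+1)) => [la|la].
  rewrite S_step.
  have -> : (l == loc k.+1) = true by apply/eqP.
  rewrite /=. slra.
have Sl : S k.+1 l = S k l by rewrite S_step (negbTE la).
have := @card_upd N (rcp k l) (rcp k.+1 l) (loc k.+1) (horr_min H k l).
move=> cu.
have {cu} cu : (#|rcp k.+1 l| + ~~ rcp k.+1 l (loc k.+1))%N = #|rcp k l|.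
  apply: cu => i ia; by rewrite /rcp Sl S_step (negbTE ia).
have IHl := IH l.
have hd : rcp k.+1 l (loc k.+1) = (k.+1%:R * x - g <= S k l).
  by rewrite /rcp Sl S_step eqxx.
rewrite Sl; move: cu; rewrite hd hk.
case: lerP => hq /= cu.
  rewrite addn0 in cu; slra.
rewrite -cu addn1 -natr1 !mulrBl mulrDl mul1r in IHl.
slra.
Qed.


Lemma unch k l n : (forall j, (k < j <= k + n)%N -> loc j != l) ->
  serv (st (k + n)) l = serv (st k) l /\ S (k + n) l = S k l.
Proof.
elim: n => [|n IH] H; first by rewrite addn0.
have [IH1 IH2] : serv (st (k + n)) l = serv (st k) l /\ S (k + n) l = S k l.
  by apply: IH => j /andP[h1 h2]; apply: H; rewrite h1 /=; lia.
have ln : (l == loc (k + n).+1) = false.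
  by apply/negbTE; rewrite eq_sym; apply: H; lia.
rewrite addnS; split; last by rewrite S_step ln.
by rewrite /= /step /= ln.
Qed.

Lemma rc_pos k l : (0 < #|rcp k l|)%N.
Proof. by apply/card_gt0P; exists l; rewrite /in_mem /= /rcp lexx. Qed.

Lemma part2 (H : horr_choice f c g loc) k l : exists k' : nat, (k < k')%N /\ loc k' = l /\
       k'%:R * x + g - start (st k) (serv (st k) l) <= f.
Proof.
have xp := x_pos.
have hNx := Nx.
set s := S k l.
set B := (N%:R * x + `|s| + g).
set m0 := (Num.truncn (B / x)).+1.
have m0B : B < m0%:R * x by rewrite -ltr_pdivrMr // truncnS_gt.
have exP : exists j, (k < j)%N && (loc j == l).
  case hh: (has (fun j => loc j == l) (iota k.+1 m0)).
    move/hasP: hh => [j]; rewrite mem_iota => /andP[h1 _] h2.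
    by exists j; rewrite h1 h2.
  exfalso.
  have nl : forall j, (k < j <= k + m0)%N -> loc j != l.
    move=> j hj; apply/negP => hl; move/hasP: hh; apply; exists j => //.
    rewrite mem_iota; lia.
  have [u1 u2] := @unch k l _ nl.
  have I := Iinv H (k + m0) l.
  rewrite u2 -/s natrD mulrDl in I.
  have r1 : 1 <= (#|rcp (k + m0) l|)%:R :> R by rewrite ler1n rc_pos.
  have r1x : x <= (#|rcp (k + m0) l|)%:R * x by rewrite ler_peMl // ltW.
  have kx : 0 <= k%:R * x by rewrite mulr_ge0 // ltW.
  have := ler_norm s.
  rewrite mulrBl in I; move: m0B; rewrite /B; slra.
case: (ex_minnP exP) => k' /andP[kk' /eqP lk'] kmin.
exists k'; split => //; split => //.
pose n := (k' - k.+1)%N.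
have ek : k' = (k + n).+1 by rewrite /n; lia.
have nl : forall j, (k < j <= k + n)%N -> loc j != l.
  move=> j hj; apply/negP => hl.
  have := kmin j; rewrite hl andbT; lia.
have [u1 u2] := @unch k l _ nl.
have I := Iinv H (k + n) l.
rewrite u2 -/s in I.
have r1 : 1 <= (#|rcp (k + n) l|)%:R :> R by rewrite ler1n rc_pos.
have r1x : x <= (#|rcp (k + n) l|)%:R * x by rewrite ler_peMl // ltW.
rewrite mulrBl in I.
rewrite ek -natr1 mulrDl mul1r -/(S k l) -/s.
slra.
Qed.

Lemma part3 t l : 0 <= t -> covered f c g loc l t.
Proof.
move=> t0.
have xp := x_pos.
set k := Num.truncn (t / x).
have /andP[h1 h2] : (k%:R <= t / x < k.+1%:R) by apply: truncn_itv; rewrite divr_ge0 // ltW.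
exists (serv (st k) l); split; first by case: (sinv_run k).
exists k; split => //.
rewrite ler_pdivlMr // in h1; rewrite ltr_pdivrMr // in h2.
by rewrite h1 ltW.
Qed.

End Proof.

Theorem theorem1 (R : archiRealFieldType) (N : nat) (f c g : R)
    (loc : nat -> 'I_N) :
  (1 <= N)%N -> 0 < f -> 0 <= c -> 0 < g -> 2 * g < f ->
  horr_choice f c g loc ->
  (forall k : nat,
     queue (run f c g loc k) != [::] /\
     ready (run f c g loc k) (dispatched (run f c g loc k))
       <= Num.max 0 (k.+1%:R * slot N f g - g)) /\
  (forall (k : nat) (l : 'I_N),
     exists k' : nat, (k < k')%N /\ loc k' = l /\
       k'%:R * slot N f g + g - start (run f c g loc k) (serv (run f c g loc k) l)
         <= f) /\
  (forall (t : R) (l : 'I_N), 0 <= t -> covered f c g loc l t).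
Proof.
move=> HN Hf Hc Hg Hfg H; split; [|split].
- by move=> k; apply: part1.
- by move=> k l; apply: part2.
- by move=> t l t0; apply: part3.
Qed.
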